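(* Let $s\in\mathbb{R}$ and let $f:\mathbb{R}^n\to\overline{\mathbb{R}}$ be variationally $s$-convex at $\bar x\in\operatorname{dom}f$ for $\bar v\in\partial f(\bar x)$. Then there exist $\varepsilon>0$ and the $f$-attentive $\varepsilon$-localization $T_\varepsilon$ of $\partial f$ around $(\bar x,\bar v)$ such that $d^2f(x|v)(w)\ge s\|w\|^2$ for all $(x,v)\in\operatorname{gph}T_\varepsilon$ and all $w\in\mathbb{R}^n$.
   Context: $f$ is proper l.s.c.; $\partial f$ is the limiting subdifferential. Variational $s$-convexity at $\bar x$ for $\bar v$: $f(\bar x)$ finite and there exist a function $\hat f$ with $\hat f-\frac s2\|\cdot\|^2$ convex, convex neighborhoods $U\ni\bar x$, $V\ni\bar v$ and $\varepsilon>0$ with $\hat f\le f$ on $U$, $(U\times V)\cap\operatorname{gph}\partial\hat f=(U_\varepsilon\times V)\cap\operatorname{gph}\partial f$ ($U_\varepsilon=\{x\in U:f(x)<f(\bar x)+\varepsilon\}$), and $\hat f=f$ at common elements. $\operatorname{gph}T_\varepsilon=\{(x,v)\in\operatorname{gph}\partial f:\|x-\bar x\|<\varepsilon,\|v-\bar v\|<\varepsilon,f(x)<f(\bar x)+\varepsilon\}$. $d^2f(x|v)(w)=\liminf_{t\downarrow0,w'\to w}\frac{f(x+tw')-f(x)-t\langle v,w'\rangle}{\frac12t^2}$. *)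

(* Defs.v *)
From HB Require Import structures.
From mathcomp Require Import all_boot all_order all_algebra.
From mathcomp Require Import all_classical all_reals.
From mathcomp Require Import ereal.
Set Implicit Arguments. Unset Strict Implicit. Unset Printing Implicit Defensive.
Import Order.TTheory GRing.Theory Num.Theory.
Local Open Scope classical_set_scope.
Local Open Scope ring_scope.

Section Defs.
Variables (R : realType) (n : nat).
Local Notation vec := 'rV[R]_n.

Definition dotv (u v : vec) : R := \sum_(i < n) u ord0 i * v ord0 i.
Definition sqn (u : vec) : R := dotv u u.
Definition enorm (u : vec) : R := Num.sqrt (sqn u).

Definition vcvg (u : nat -> vec) (x : vec) : Prop :=
  forall e : R, 0 < e -> exists N : nat, forall k, (N <= k)%N -> enorm (u k - x) < e.

Definition proper_fun (f : vec -> \bar R) : Prop :=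
  (forall x, f x != -oo%E) /\ exists x, f x \is a fin_num.

Definition lsc_fun (f : vec -> \bar R) : Prop :=
  forall x (a : R), (a%:E < f x)%E ->
    exists d : R, 0 < d /\ forall y, enorm (y - x) < d -> (a%:E < f y)%E.

(* regular (Frechet) subgradient: liminf_{y->x} (f y - f x - <v,y-x>)/|y-x| >= 0 *)
Definition regular_subdiff (f : vec -> \bar R) (x v : vec) : Prop :=
  f x \is a fin_num /\
  forall e : R, 0 < e -> exists d : R, 0 < d /\
    forall y, enorm (y - x) < d ->
      ((fine (f x) + dotv v (y - x) - e * enorm (y - x))%:E <= f y)%E.

Definition limiting_subdiff (f : vec -> \bar R) (x v : vec) : Prop :=
  f x \is a fin_num /\
  exists (xs vs : nat -> vec),
    (forall k, regular_subdiff f (xs k) (vs k)) /\ vcvg xs x /\ vcvg vs v /\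
    (forall e : R, 0 < e -> exists N : nat, forall k, (N <= k)%N ->
        f (xs k) \is a fin_num /\ `|fine (f (xs k)) - fine (f x)| < e).

(* convexity of an extended-real-valued function (convex epigraph) *)
Definition econvex (g : vec -> \bar R) : Prop :=
  forall (x y : vec) (a b t : R), 0 <= t -> t <= 1 ->
    (g x <= a%:E)%E -> (g y <= b%:E)%E ->
    (g (t *: x + (1 - t) *: y)%R <= (t * a + (1 - t) * b)%:E)%E.

Definition convset (U : set vec) : Prop :=
  forall x y (t : R), 0 <= t -> t <= 1 -> U x -> U y -> U (t *: x + (1 - t) *: y).

Definition is_nbhd (U : set vec) (x : vec) : Prop :=
  exists d : R, 0 < d /\ forall y, enorm (y - x) < d -> U y.

Definition var_s_convex (s : R) (f : vec -> \bar R) (xb vb : vec) : Prop :=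
  f xb \is a fin_num /\
  exists (fh : vec -> \bar R) (U V : set vec) (eps : R),
    econvex (fun x => (fh x - (s / 2 * sqn x)%R%:E)%E) /\
    convset U /\ convset V /\ is_nbhd U xb /\ is_nbhd V vb /\ 0 < eps /\
    (forall x, U x -> (fh x <= f x)%E) /\
    (forall x v, (U x /\ V v /\ limiting_subdiff fh x v) <->
                 ((U x /\ (f x < (fine (f xb) + eps)%:E)%E) /\ V v /\
                  limiting_subdiff f x v)) /\
    (forall x v, U x -> V v -> limiting_subdiff fh x v -> fh x = f x).

Definition gph_T (f : vec -> \bar R) (xb vb : vec) (eps : R) (x v : vec) : Prop :=
  limiting_subdiff f x v /\ enorm (x - xb) < eps /\ enorm (v - vb) < eps /\
  (f x < (fine (f xb) + eps)%:E)%E.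

(* second subderivative d^2 f(x|v)(w) =
   liminf_{t \downarrow 0, w' -> w} (f(x+tw') - f x - t<v,w'>) / (t^2/2) *)
Definition d2 (f : vec -> \bar R) (x v w : vec) : \bar R :=
  ereal_sup [set ereal_inf [set q | exists (t : R) (w' : vec),
                  [/\ 0 < t, t < d, enorm (w' - w) < d &
                   q = ((2 / t ^+ 2)%:E *
                        (f (x + t *: w')%R - f x - (t * dotv v w')%:E))%E]]
            | d in [set d : R | 0 < d]].

End Defs.

(* Main.v *)
Require Import Defs.
From HB Require Import structures.
From mathcomp Require Import all_boot all_order all_algebra.
From mathcomp Require Import all_classical all_reals.
From mathcomp Require Import ereal.
Import Order.TTheory GRing.Theory Num.Theory.
Local Open Scope classical_set_scope.
Local Open Scope ring_scope.
From mathcomp Require Import ring lra.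
Set Implicit Arguments. Unset Strict Implicit.


Lemma sqn_ge0 (R : realType) n (u : 'rV[R]_n) : 0 <= sqn u.
Proof. rewrite /sqn /dotv; apply: sumr_ge0 => i _; rewrite -expr2; exact: sqr_ge0. Qed.

Lemma enorm_ge0 (R : realType) n (u : 'rV[R]_n) : 0 <= enorm u.
Proof. exact: sqrtr_ge0. Qed.

Lemma coord_le (R : realType) n (u : 'rV[R]_n) i : `|u ord0 i| <= enorm u.
Proof.
rewrite /enorm -sqrtr_sqr ler_sqrt ?sqn_ge0 // /sqn /dotv (bigD1 i) //= expr2 lerDl.
apply: sumr_ge0 => j _; rewrite -expr2; exact: sqr_ge0.
Qed.

Lemma enorm_lt (R : realType) n (u : 'rV[R]_n) d : 0 < d -> (enorm u < d) = (sqn u < d ^+ 2).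
Proof.
move=> d0; rewrite /enorm -{1}(ger0_norm (ltW d0)) -sqrtr_sqr ltr_sqrt //.
exact: exprn_gt0.
Qed.

Lemma sum_bound (R : realType) n (F : 'I_n -> R) B :
  (forall i, `|F i| <= B) -> `|\sum_(i < n) F i| <= n%:R * B.
Proof.
move=> h; apply: le_trans (ler_norm_sum _ _ _) _.
apply: le_trans (ler_sum _ (fun i _ => h i)) _.
by rewrite sumr_const card_ord mulr_natl.
Qed.

Lemma sqn_scale (R : realType) n (t : R) (w : 'rV[R]_n) : sqn (t *: w) = t ^+ 2 * sqn w.
Proof. rewrite /sqn /dotv mulr_sumr; apply: eq_bigr => i _; rewrite !mxE; ring. Qed.

Lemma dot_scale (R : realType) n (t : R) (v w : 'rV[R]_n) : dotv v (t *: w) = t * dotv v w.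
Proof. rewrite /dotv mulr_sumr; apply: eq_bigr => i _; rewrite !mxE; ring. Qed.

Lemma dot0 (R : realType) n (w : 'rV[R]_n) : dotv 0 w = 0.
Proof. rewrite /dotv big1 // => i _; rewrite !mxE; ring. Qed.

Lemma sqnN (R : realType) n (w : 'rV[R]_n) : sqn (- w) = sqn w.
Proof. rewrite /sqn /dotv; apply: eq_bigr => i _; rewrite !mxE; ring. Qed.

Lemma sqn_add_le (R : realType) n (a b : 'rV[R]_n) : sqn (a + b) <= 2 * sqn a + 2 * sqn b.
Proof.
rewrite /sqn /dotv !mulr_sumr -big_split /=; apply: ler_sum => i _; rewrite !mxE.
have := sqr_ge0 (a ord0 i - b ord0 i); rewrite expr2 => h; nra.
Qed.

Lemma sqn_convex (R : realType) n (t : R) (x y : 'rV[R]_n) :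
  sqn (t *: y + (1 - t) *: x) = t * sqn y + (1 - t) * sqn x - t * (1 - t) * sqn (y - x).
Proof.
rewrite /sqn /dotv !mulr_sumr -big_split -sumrB /=; apply: eq_bigr => i _; rewrite !mxE; ring.
Qed.

Lemma enorm_scale (R : realType) n (t : R) (u : 'rV[R]_n) : enorm (t *: u) = `|t| * enorm u.
Proof. by rewrite /enorm sqn_scale sqrtrM ?sqrtr_sqr // sqr_ge0. Qed.

Lemma pick_small (R : realType) (K eta : R) : 0 <= K -> 0 < eta ->
  exists d : R, [/\ 0 < d, d <= 1 & d * K < eta].
Proof.
move=> K0 e0; exists (Order.min 1 (eta / (K + 1))).
have K1 : 0 < K + 1 by lra.
split; first by rewrite lt_min ltr01 divr_gt0.
  by rewrite ge_min lexx.
have h : Order.min 1 (eta / (K + 1)) * (K + 1) <= eta.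
  by rewrite -ler_pdivlMr // ge_min lexx orbT.
have : 0 < Order.min 1 (eta / (K + 1)) by rewrite lt_min ltr01 divr_gt0.
nra.
Qed.

Lemma small (R : realType) (a K t0 : R) : 0 < t0 ->
  (forall t, 0 < t -> t < t0 -> a <= K * t) -> a <= 0.
Proof.
move=> t00 h; rewrite leNgt; apply/negP => a0.
have [d [d0 d1 dK]] := @pick_small R `|K| a (normr_ge0 K) a0.
set t := Order.min d (t0 / 2).
have tpos : 0 < t by rewrite lt_min d0 divr_gt0.
have tt0 : t < t0 by rewrite gt_min; apply/orP; right; lra.
have td : t <= d by rewrite ge_min lexx.
have := h t tpos tt0.
have : K * t <= `|K| * t.
  apply: ler_wpM2r; [exact: ltW | exact: ler_norm].
have : `|K| * t <= `|K| * d by rewrite ler_wpM2l.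
lra.
Qed.

Lemma sub_ineq (R : realType) n (s : R) (fh : 'rV[R]_n -> \bar R) x0 v0 :
  econvex (fun x => (fh x - (s / 2 * sqn x)%:E)%E) ->
  regular_subdiff fh x0 v0 ->
  forall y, ((fine (fh x0) + dotv v0 (y - x0) + s / 2 * sqn (y - x0))%:E <= fh y)%E.
Proof.
move=> cvx [fin reg] y.
set fx := fine (fh x0).
have fhx : fh x0 = fx%:E by rewrite /fx fineK.
set N := enorm (y - x0); set Q := sqn (y - x0); set D := dotv v0 (y - x0).
have N0 : 0 <= N by exact: enorm_ge0.
have key : forall b, (fh y <= b%:E)%E -> fx + D + s / 2 * Q <= b.
  move=> b hb.
  rewrite -subr_le0.
  apply: (@small R _ N 1 ltr01) => e e0 _.
  rewrite -subr_le0.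
  have [d [d0 hd]] := reg e e0.
  apply: (@small R _ (s / 2 * Q) (Order.min 1 (d / (N + 1)))).
    by rewrite lt_min ltr01 divr_gt0 //; lra.
  move=> t t0; rewrite lt_min => /andP[t1 tdN].
  have tN : t * N < d.
    move: tdN; rewrite ltr_pdivlMr; last by lra.
    nra.
  set z := t *: y + (1 - t) *: x0.
  have zx : z - x0 = t *: (y - x0).
    by apply/matrixP => i j; rewrite !mxE; ring.
  have hz := hd z.
  rewrite zx enorm_scale (ger0_norm (ltW t0)) dot_scale in hz.
  have {}hz := hz tN.
  have c1 : (fh y - (s / 2 * sqn y)%:E <= (b - s / 2 * sqn y)%:E)%E.
    by rewrite lee_subel_addr // -EFinD subrK.
  have c2 : (fh x0 - (s / 2 * sqn x0)%:E <= (fx - s / 2 * sqn x0)%:E)%E.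
    by rewrite fhx -EFinB.
  have := cvx y x0 _ _ t (ltW t0) (ltW t1) c1 c2.
  rewrite lee_subel_addr // -EFinD => hc.
  have := le_trans hz hc; rewrite lee_fin -/z sqn_convex -/Q => h.
  suff : t * (fx + D + s / 2 * Q - b - e * N) <= t * (s / 2 * Q * t).
    rewrite ler_pM2l //; lra.
  rewrite -/fx -/D -/N -/Q in h. nra.
case E : (fh y) => [r| |].
- by rewrite lee_fin; apply: key; rewrite E.
- exact: leey.
- have hk := key (fx + D + s / 2 * Q - 1)%R.
  rewrite E leNye in hk.
  exfalso; have := hk isT; lra.
Qed.

Lemma norm5 (R : realType) (t1 t2 t3 t4 t5 : R) :
  `|t1 + t2 + t3 + t4 + t5| <= `|t1| + `|t2| + `|t3| + `|t4| + `|t5|.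
Proof.
apply: le_trans (ler_normD _ _) _; rewrite lerD2r.
apply: le_trans (ler_normD _ _) _; rewrite lerD2r.
apply: le_trans (ler_normD _ _) _; rewrite lerD2r.
exact: ler_normD.
Qed.

Lemma prod_le (R : realType) (a b A B : R) : `|a| <= A -> `|b| <= B -> `|a * b| <= A * B.
Proof. by move=> ha hb; rewrite normrM; apply: ler_pM. Qed.

Lemma phi_cont (R : realType) n (c : R) (y x v : 'rV[R]_n) (eta : R) : 0 < eta ->
  exists d : R, 0 < d /\ forall x' v' : 'rV[R]_n, enorm (x' - x) < d -> enorm (v' - v) < d ->
   `|(dotv v' (y - x') + c * sqn (y - x')) - (dotv v (y - x) + c * sqn (y - x))| < eta.
Proof.
move=> e0.
set Y := enorm (y - x); set Vn := enorm v.
set C := Y + 1 + Vn + `|c| * (1 + 2 * Y).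
have Y0 : 0 <= Y by exact: enorm_ge0.
have V0 : 0 <= Vn by exact: enorm_ge0.
have C0 : 0 <= C by rewrite /C; have := normr_ge0 c; nra.
have [d [d0 d1 dK]] := @pick_small R (n%:R * C) eta (mulr_ge0 (ler0n _ _) C0) e0.
exists d; split => // x' v' hx hv.
set G := fun i : 'I_n =>
  (v' ord0 i - v ord0 i) * (y ord0 i - x ord0 i) + - ((v' ord0 i - v ord0 i) * (x' ord0 i - x ord0 i))
  + - (v ord0 i * (x' ord0 i - x ord0 i)) + c * ((x' ord0 i - x ord0 i) * (x' ord0 i - x ord0 i))
  + - (2 * c * ((x' ord0 i - x ord0 i) * (y ord0 i - x ord0 i))).
have -> : (dotv v' (y - x') + c * sqn (y - x')) - (dotv v (y - x) + c * sqn (y - x))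
    = \sum_(i < n) G i.
  rewrite /dotv /sqn !mulr_sumr -!big_split -sumrB /=; apply: eq_bigr => i _.
  rewrite /G !mxE; ring.
apply: le_lt_trans (@sum_bound R n G (d * C) _) _; last first.
  by rewrite mulrA (mulrC _ d) -mulrA.
move=> i; rewrite /G /=.
have ha : `|x' ord0 i - x ord0 i| <= d.
  by have := coord_le (x' - x) i; rewrite !mxE => h; apply: (le_trans h); apply: ltW.
have hb : `|v' ord0 i - v ord0 i| <= d.
  by have := coord_le (v' - v) i; rewrite !mxE => h; apply: (le_trans h); apply: ltW.
have hp : `|y ord0 i - x ord0 i| <= Y.
  by have := coord_le (y - x) i; rewrite !mxE.
have hv' : `|v ord0 i| <= Vn by exact: coord_le.
apply: le_trans (norm5 _ _ _ _ _) _.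
rewrite !normrN.
have e1 := prod_le hb hp.
have e2 := prod_le hb ha.
have e3 := prod_le hv' ha.
have e4 : `|c * ((x' ord0 i - x ord0 i) * (x' ord0 i - x ord0 i))| <= `|c| * (d * d).
  by apply: prod_le => //; apply: prod_le.
have e5 : `|2 * c * ((x' ord0 i - x ord0 i) * (y ord0 i - x ord0 i))| <= (2 * `|c|) * (d * Y).
  apply: prod_le; last by apply: prod_le.
  by rewrite normrM ger0_norm.
have c0 := normr_ge0 c.
have dd : d * d <= d by nra.
have cdd : `|c| * (d * d) <= `|c| * d by nra.
rewrite /C; nra.
Qed.

Lemma lim_ineq (R : realType) n (s : R) (fh : 'rV[R]_n -> \bar R) x v :
  econvex (fun x => (fh x - (s / 2 * sqn x)%:E)%E) ->
  limiting_subdiff fh x v ->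
  forall y, ((fine (fh x) + dotv v (y - x) + s / 2 * sqn (y - x))%:E <= fh y)%E.
Proof.
move=> cvx [finx [xs [vs [reg [cx [cv cf]]]]]] y.
have H k := sub_ineq cvx (reg k) y.
case E : (fh y) => [r| |]; last first.
- by have := H 0%N; rewrite E leeNy_eq.
- exact: leey.
rewrite lee_fin; apply/ler_addgt0Pr => eta e0.
have e2 : 0 < eta / 2 by rewrite divr_gt0.
have [d [d0 hd]] := phi_cont (s / 2) y x v e2.
have [N1 h1] := cf _ e2.
have [N2 h2] := cx _ d0.
have [N3 h3] := cv _ d0.
set k := (N1 + N2 + N3)%N.
have [_ hk1] := h1 k (leq_trans (leq_addr _ _) (leq_addr _ _)).
have hk2 := h2 k (leq_trans (leq_addl _ _) (leq_addr _ _)).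
have hk3 := h3 k (leq_addl _ _).
have := hd _ _ hk2 hk3.
have := H k; rewrite E lee_fin.
move: hk1; set a := fine (fh (xs k)); set b := fine (fh x).
set p := dotv (vs k) _ + _; set q := dotv v _ + _.
rewrite !ltr_norml.
move=> /andP[? ?] hr /andP[? ?].
rewrite -!addrA -/p -/q in hr *. lra.
Qed.

Lemma enorm0 (R : realType) n : enorm (0 : 'rV[R]_n) = 0.
Proof. by rewrite /enorm /sqn /dotv big1 ?sqrtr0 // => i _; rewrite mxE mul0r. Qed.

Lemma enormN (R : realType) n (u : 'rV[R]_n) : enorm (- u) = enorm u.
Proof. by rewrite /enorm sqnN. Qed.

Unset Implicit Arguments.

Theorem corollary3p6 (R : realType) (n : nat) (s : R) (f : 'rV[R]_n -> \bar R)
    (xb vb : 'rV[R]_n) :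
  proper_fun f -> lsc_fun f ->
  f xb \is a fin_num -> limiting_subdiff f xb vb ->
  var_s_convex s f xb vb ->
  exists eps : R, 0 < eps /\
    forall x v, gph_T f xb vb eps x v ->
      forall w : 'rV[R]_n, ((s * sqn w)%:E <= d2 f x v w)%E.
Proof.
move=> _ _ finxb _ [_ [fh [U [V [eps0 [cvx [cU [cV [[dU [dU0 hU]] [[dV [dV0 hV]]
  [e0 [fhle [hiff eqf]]]]]]]]]]]]].
have dU2 : 0 < dU / 2 by rewrite divr_gt0.
exists (Order.min (Order.min (dU / 2) dV) eps0); split.
  by rewrite !lt_min dU2 dV0 e0.
move=> x v [lsx [hxb [hvb hfx]]] w.
move: hxb hvb hfx; rewrite !lt_min => /andP[/andP[hx1 _] _] /andP[/andP[_ hv1] _].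
have hmin : Order.min (Order.min (dU / 2) dV) eps0 <= eps0 by rewrite ge_min lexx orbT.
move=> hfx.
have hfx' : (f x < (fine (f xb) + eps0)%:E)%E.
  by apply: (lt_le_trans hfx); rewrite lee_fin lerD2l.
have Ux : U x by apply: hU; apply: (lt_trans hx1); lra.
have Vv : V v by exact: hV.
have [_ [_ lsh]] := (hiff x v).2 (conj (conj Ux hfx') (conj Vv lsx)).
have fheq := eqf x v Ux Vv lsh.
have LI := lim_ineq cvx lsh.
have finfx : f x \is a fin_num by case: lsx.
set fx := fine (f x).
have fxE : f x = fx%:E by rewrite /fx fineK.
have main : forall eta, 0 < eta -> ((s * sqn w - eta)%:E <= d2 f x v w)%E.
  move=> eta eta0.
  set P := 2 + 2 * sqn w.
  have P0 : 0 <= P by have := sqn_ge0 w; rewrite /P; lra.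
  have [d1 [d10 hd1]] := phi_cont s 0 (- w) 0 eta0.
  have [d2' [d20 d21 d2K]] := @pick_small R (P + 1) (dU / 2) ltac:(lra) dU2.
  set d := Order.min d1 d2'.
  have d0 : 0 < d by rewrite lt_min d10 d20.
  apply: (@le_trans _ _ (ereal_inf [set q | exists (t : R) (w' : 'rV[R]_n),
                  [/\ 0 < t, t < d, enorm (w' - w) < d &
                   q = ((2 / t ^+ 2)%:E *
                        (f (x + t *: w')%R - f x - (t * dotv v w')%:E))%E]])).
    apply: le_ereal_inf_tmp => q [t [w' [t0 td hw' ->]]].
    have td1 : t < d1 by move: td; rewrite lt_min => /andP[].
    have td2 : t < d2' by move: td; rewrite lt_min => /andP[].
    have hw1 : enorm (w' - w) < d1 by move: hw'; rewrite lt_min => /andP[].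
    have hw2 : enorm (w' - w) < d2' by move: hw'; rewrite lt_min => /andP[].
    have hs : s * sqn w - eta <= s * sqn w'.
      have := hd1 (- w') 0; rewrite subrr enorm0 -opprD enormN => /(_ hw1 d10).
      rewrite !dot0 !sub0r !opprK !add0r ltr_norml => /andP[h1 _]; lra.
    have sw' : sqn w' <= P.
      have := sqn_add_le (w' - w) w; rewrite subrK.
      have : sqn (w' - w) < 1.
        have := hw2; rewrite enorm_lt // => h; apply: (lt_le_trans h).
        by rewrite expr_le1 // ltW.
      rewrite /P; lra.
    have sw0 := sqn_ge0 w'.
    have tw : sqn (t *: w') < (dU / 2) ^+ 2.
      rewrite sqn_scale.
      have h1 : t * (P + 1) < dU / 2 by nra.
      have h2 : (t * (P + 1)) ^+ 2 < (dU / 2) ^+ 2.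
        by rewrite ltrXn2r // mulr_ge0 // ?ltW //; lra.
      move: h2; rewrite !expr2; nra.
    have xb2 : sqn (x - xb) < (dU / 2) ^+ 2 by rewrite -enorm_lt.
    set y := x + t *: w'.
    have Uy : U y.
      apply: hU; rewrite enorm_lt //.
      have -> : y - xb = (x - xb) + t *: w' by rewrite /y addrAC.
      apply: (le_lt_trans (sqn_add_le _ _)).
      move: tw xb2; rewrite !expr2; lra.
    have yx : y - x = t *: w' by rewrite /y addrC addKr.
    have := LI y; rewrite yx dot_scale sqn_scale fheq -/fx => hL.
    have hf := le_trans hL (fhle y Uy).
    rewrite fxE.
    case E : (f y) => [r| |].
    - rewrite E lee_fin in hf.
      rewrite -!EFinB -EFinM lee_fin.
      have t20 : 0 < t ^+ 2 by rewrite exprn_gt0.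
      apply: (le_trans hs).
      have h : s / 2 * (t ^+ 2 * sqn w') <= r - fx - t * dotv v w' by lra.
      have := ler_wpM2l (ltW (divr_gt0 (ltr0n _ 2) t20)) h.
      have -> : 2 / t ^+ 2 * (s / 2 * (t ^+ 2 * sqn w')) = s * sqn w' by field; lra.
      by [].
    - have -> : (+oo - fx%:E - (t * dotv v w')%:E = +oo)%E by [].
      rewrite mulry gtr0_sg ?mul1e ?leey // divr_gt0 // exprn_gt0 //.
    - by move: hf; rewrite E leeNy_eq.
  by rewrite /d2 ereal_sup_ubound //=; exists d.
case E : (d2 f x v w) => [r| |].
- rewrite lee_fin; apply/ler_addgt0Pr => e ep; have := main e ep; rewrite E lee_fin; lra.
- exact: leey.
- by have := main 1 ltr01; rewrite E leeNy_eq.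
Qed.
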